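(* For $M\in\Lambda$, the following are equivalent: (1) $M$ is in $\mathsf v$-normal form; (2) every $t\in\mathcal T(M)$ is in $\beta_r\sigma$-normal form, i.e. contains no subterm that is a $\beta_r$-, $\sigma_1$- or $\sigma_3$-redex.
   Context: $\lambda$-terms and values are $M,N::=V\mid MN$, $V::=x\mid\lambda x.M$, up to $\alpha$-conversion. Rules: $(\beta_v)$ $(\lambda x.M)V\to M\{x:=V\}$ if $V$ is a value; $(\sigma_1)$ $(\lambda x.M)NP\to(\lambda x.MP)N$ if $x\notin\mathrm{FV}(P)$; $(\sigma_3)$ $V((\lambda x.M)N)\to(\lambda x.VM)N$ if $V$ is a value and $x\notin\mathrm{FV}(V)$. $M$ is in $\mathsf v$-normal form if it contains no redex of these three kinds. Resource calculus: resource values $v::=x\mid\lambda x.t$; simple terms $s,t::=st\mid[v_1,\dots,v_k]$ ($k\ge0$, bags are finite multisets); $[x^n]$ is the bag of $n$ copies of $x$. Redexes: a $\beta_r$-redex is $[\lambda x.t][v_1,\dots,v_n]$; a $\sigma_1$-redex is $[\lambda x.t]s_1s_2$ (with $x\notin\mathrm{FV}(s_1)$ after renaming); a $\sigma_3$-redex is $[v]([\lambda x.t]s)$ with $v$ a resource value (with $x\notin\mathrm{FV}(v)$ after renaming). Taylor expansion: $\mathcal T(x)=\{[x^n]\mid n\ge0\}$, $\mathcal T(\lambda x.N)=\{[\lambda x.t_1,\dots,\lambda x.t_n]\mid n\ge0,\ t_i\in\mathcal T(N)\}$, $\mathcal T(PQ)=\{st\mid s\in\mathcal T(P),t\in\mathcal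 T(Q)\}$. *)

(* Defs.v *)
(* Terms are represented with de Bruijn indices (i.e. up to
   alpha-conversion). *)
From Stdlib Require Import List.
Import ListNotations.

Inductive term : Type :=
| Var : nat -> term
| Lam : term -> term
| App : term -> term -> term.

Definition is_value (M : term) : Prop :=
  match M with Var _ | Lam _ => True | App _ _ => False end.

Inductive subterm : term -> term -> Prop :=
| sub_refl M : subterm M M
| sub_lam N M : subterm N M -> subterm N (Lam M)
| sub_appl N M P : subterm N M -> subterm N (App M P)
| sub_appr N M P : subterm N P -> subterm N (App M P).

Definition beta_v_redex (R : term) : Prop :=
  exists M V, R = App (Lam M) V /\ is_value V.

(** sigma_1-redex: (\x.M) N P  (the side condition x notin FV(P) is always
    achievable up to alpha-renaming; with de Bruijn indices the reduct
    simply shifts P). *)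
Definition sigma1_redex (R : term) : Prop :=
  exists M N P, R = App (App (Lam M) N) P.

(** sigma_3-redex: V ((\x.M) N) with V a value (side condition as above). *)
Definition sigma3_redex (R : term) : Prop :=
  exists V M N, R = App V (App (Lam M) N) /\ is_value V.

Definition v_redex (R : term) : Prop :=
  beta_v_redex R \/ sigma1_redex R \/ sigma3_redex R.

Definition v_normal (M : term) : Prop :=
  forall N, subterm N M -> ~ v_redex N.

(** Simple terms s,t ::= s t | [v1,...,vk]; resource values v ::= x | \x.t.
    Bags (finite multisets) are represented by lists; all notions below are
    invariant under permutation of bags. *)
Inductive rterm : Type :=
| rapp : rterm -> rterm -> rterm
| rbag : list rval -> rterm
with rval : Type :=
| rvar : nat -> rval
| rlam : rterm -> rval.

Inductive rsubterm : rterm -> rterm -> Prop :=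
| rsub_refl t : rsubterm t t
| rsub_appl u s t : rsubterm u s -> rsubterm u (rapp s t)
| rsub_appr u s t : rsubterm u t -> rsubterm u (rapp s t)
| rsub_bag u t l : In (rlam t) l -> rsubterm u t -> rsubterm u (rbag l).

Definition beta_r_redex (r : rterm) : Prop :=
  exists t vs, r = rapp (rbag [rlam t]) (rbag vs).

Definition rsigma1_redex (r : rterm) : Prop :=
  exists t s1 s2, r = rapp (rapp (rbag [rlam t]) s1) s2.

Definition rsigma3_redex (r : rterm) : Prop :=
  exists v t s, r = rapp (rbag [v]) (rapp (rbag [rlam t]) s).

Definition r_redex (r : rterm) : Prop :=
  beta_r_redex r \/ rsigma1_redex r \/ rsigma3_redex r.

Definition r_normal (t : rterm) : Prop :=
  forall u, rsubterm u t -> ~ r_redex u.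

(** * Taylor expansion: taylor M t  means  t \in T(M). *)
Inductive taylor : term -> rterm -> Prop :=
| taylor_var x n : taylor (Var x) (rbag (repeat (rvar x) n))
| taylor_lam N ts : Forall (taylor N) ts -> taylor (Lam N) (rbag (map rlam ts))
| taylor_app P Q s t : taylor P s -> taylor Q t -> taylor (App P Q) (rapp s t).

(* Main.v *)
Require Import Defs.
From Stdlib Require Import List.
Import ListNotations.

Lemma taylor_ex M : exists t, taylor M t.
Proof.
  induction M as [x|N IH|P IHP Q IHQ].
  - exists (rbag (repeat (rvar x) 0)); constructor.
  - exists (rbag (map rlam [])); constructor; constructor.
  - destruct IHP as [s Hs]; destruct IHQ as [t Ht]; exists (rapp s t); constructor; auto.
Qed.

Lemma sub_lift N M : subterm N M -> forall u, taylor N u -> exists t, taylor M t /\ rsubterm u t.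
Proof.
  induction 1; intros u Hu.
  - exists u; split; [auto|constructor].
  - destruct (IHsubterm u Hu) as [t [Ht Hs]].
    exists (rbag (map rlam [t])); split.
    + constructor; constructor; auto.
    + eapply rsub_bag; [simpl; left; reflexivity|exact Hs].
  - destruct (IHsubterm u Hu) as [t [Ht Hs]].
    destruct (taylor_ex P) as [t2 H2].
    exists (rapp t t2); split; [constructor; auto|apply rsub_appl; auto].
  - destruct (IHsubterm u Hu) as [t [Ht Hs]].
    destruct (taylor_ex M) as [t2 H2].
    exists (rapp t2 t); split; [constructor; auto|apply rsub_appr; auto].
Qed.

Lemma proj u t : rsubterm u t -> forall M, taylor M t -> exists N, subterm N M /\ taylor N u.
Proof.
  induction 1; intros M HM.
  - exists M; split; [constructor|auto].
  - inversion HM; subst.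
    match goal with Hp : taylor P s |- _ => destruct (IHrsubterm _ Hp) as [N [H1 H2]] end.
    exists N; split; [apply sub_appl|]; auto.
  - inversion HM; subst.
    match goal with Hp : taylor Q t |- _ => destruct (IHrsubterm _ Hp) as [N [H1 H2]] end.
    exists N; split; [apply sub_appr|]; auto.
  - inversion HM; subst.
    + apply repeat_spec in H. discriminate.
    + apply in_map_iff in H as [x [Hx Hin]]. injection Hx as ->.
      match goal with Hf : Forall _ _ |- _ => rewrite Forall_forall in Hf; rename Hf into HF end.
      destruct (IHrsubterm _ (HF _ Hin)) as [N' [H1 H3]].
      exists N'; split; [apply sub_lam|]; auto.
Qed.

Lemma taylor_bag_value V l : taylor V (rbag l) -> is_value V.
Proof. intros H; inversion H; simpl; auto. Qed.

Lemma taylor_single_lam P t : taylor P (rbag [rlam t]) -> exists M', P = Lam M'.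
Proof.
  intros H; inversion H; subst.
  - destruct n; simpl in *; discriminate.
  - eauto.
Qed.

Theorem lemma3p13 (M : term) :
  v_normal M <-> (forall t : rterm, taylor M t -> r_normal t).
Proof.
  split.
  - intros HM t Ht u Hu Hr.
    destruct (proj u t Hu M Ht) as [N [HN Htn]].
    apply (HM N HN).
    destruct Hr as [[t0 [vs E]]|[[t0 [s1 [s2 E]]]|[v [t0 [s E]]]]]; subst.
    + inversion Htn; subst.
      match goal with Hl : taylor _ (rbag [rlam _]) |- _ => destruct (taylor_single_lam _ _ Hl) as [M' ->] end.
      left; exists M', Q; split; auto. eapply taylor_bag_value; eauto.
    + inversion Htn; subst. match goal with Ha : taylor _ (rapp _ _) |- _ => inversion Ha; subst end.
      match goal with Hl : taylor _ (rbag [rlam _]) |- _ => destruct (taylor_single_lam _ _ Hl) as [M' ->] end.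
      right; left; exists M', Q0, Q; auto.
    + inversion Htn; subst. match goal with Ha : taylor _ (rapp _ _) |- _ => inversion Ha; subst end.
      match goal with Hl : taylor _ (rbag [rlam _]) |- _ => destruct (taylor_single_lam _ _ Hl) as [M' ->] end.
      right; right; exists P, M', Q0; split; auto. eapply taylor_bag_value; eauto.
  - intros H N HN Hr.
    assert (exists u, taylor N u /\ r_redex u) as [u [Hu Hru]].
    { destruct Hr as [[M' [V [E HV]]]|[[M' [N' [P E]]]|[V [M' [N' [E HV]]]]]]; subst.
      - destruct (taylor_ex M') as [t Ht]. destruct (taylor_ex V) as [s Hs].
        destruct V; simpl in HV; try contradiction; inversion Hs; subst.
        + exists (rapp (rbag (map rlam [t])) (rbag (repeat (rvar n) n0))).
          split; [repeat constructor; auto|left; eexists; eexists; reflexivity].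
        + exists (rapp (rbag (map rlam [t])) (rbag (map rlam ts))).
          split; [repeat constructor; auto|left; eexists; eexists; reflexivity].
      - destruct (taylor_ex M') as [t Ht]. destruct (taylor_ex N') as [s Hs].
        destruct (taylor_ex P) as [r Hr].
        exists (rapp (rapp (rbag (map rlam [t])) s) r).
        split; [repeat constructor; auto|right; left; do 3 eexists; reflexivity].
      - destruct (taylor_ex M') as [t Ht]. destruct (taylor_ex N') as [s Hs].
        destruct V; simpl in HV; try contradiction.
        + exists (rapp (rbag (repeat (rvar n) 1)) (rapp (rbag (map rlam [t])) s)).
          split; [repeat constructor; auto|right; right; do 3 eexists; reflexivity].
        + destruct (taylor_ex V) as [r Hr].
          exists (rapp (rbag (map rlam [r])) (rapp (rbag (map rlam [t])) s)).
          split; [repeat constructor; auto|right; right; do 3 eexists; reflexivity]. }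
    destruct (sub_lift N M HN u Hu) as [t [Ht Hs]].
    exact (H t Ht u Hs Hru).
Qed.
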